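(* Let $q\geq 2$, $d_1\geq 1$, $d_2\geq 1$ be integers with $\gcd(d_1,d_2)=1$. Then there exists an integer $c$ with $\gcd(c,q-1)=1$ and \[ \gcd(cd_1-d_2,\,q-1)=\begin{cases}2 & \text{if } q,\ d_1,\ d_2 \text{ are all odd},\\ 1 & \text{otherwise}.\end{cases} \] *)

(* Defs.v *)
From Stdlib Require Export ZArith.

(* Main.v *)
Require Import Defs.
From Stdlib Require Import ZArith Znumtheory Lia.
Open Scope Z_scope.

Lemma prime_divisor_exists : forall n, 1 < n -> exists p, prime p /\ (p | n).
Proof.
  intros n Hn0. assert (Hn : 0 <= n) by lia. revert Hn0.
  pattern n; apply Z_lt_induction; [|exact Hn].
  intros x IH Hx.
  destruct (prime_dec x) as [Hp|Hp].
  - exists x; split; auto. apply Z.divide_refl.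
  - destruct (not_prime_divide x Hx Hp) as [m [Hm Hmx]].
    destruct (IH m ltac:(lia) ltac:(lia)) as [p [Pp Pd]].
    exists p; split; auto. eapply Z.divide_trans; eauto.
Qed.

Lemma gcd_one_of_noprime a b : b <> 0 ->
  (forall p, prime p -> (p | a) -> (p | b) -> False) -> Z.gcd a b = 1.
Proof.
  intros Hb H.
  assert (G0 : 0 <= Z.gcd a b) by apply Z.gcd_nonneg.
  assert (G1 : Z.gcd a b <> 0) by (intro E; apply Z.gcd_eq_0 in E; lia).
  destruct (Z.eq_dec (Z.gcd a b) 1) as [E|E]; auto.
  destruct (prime_divisor_exists (Z.gcd a b) ltac:(lia)) as [p [Pp Pd]].
  exfalso; apply (H p Pp).
  - eapply Z.divide_trans; [exact Pd| apply Z.gcd_divide_l].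
  - eapply Z.divide_trans; [exact Pd| apply Z.gcd_divide_r].
Qed.

Lemma one_or_two g : 0 < g -> (forall p, prime p -> p <> 2 -> (p | g) -> False) ->
  ~ (4 | g) -> g = 1 \/ g = 2.
Proof.
  intros Hg H H4.
  destruct (Z.eq_dec g 1) as [E|E]; [left; auto|].
  destruct (prime_divisor_exists g ltac:(lia)) as [p [Pp Pd]].
  destruct (Z.eq_dec p 2) as [E2|E2]; [|exfalso; eapply H; eauto].
  subst p. destruct Pd as [h Hh].
  destruct (Z.eq_dec h 1) as [E1|E1]; [right; lia|].
  destruct (prime_divisor_exists h ltac:(lia)) as [r [Pr Rd]].
  destruct (Z.eq_dec r 2) as [E3|E3].
  - subst r. exfalso; apply H4. destruct Rd as [k Hk]. exists k. lia.
  - exfalso; apply (H r Pr E3). eapply Z.divide_trans; [exact Rd|]. exists 2; lia.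
Qed.

Lemma prime_div_2 r : prime r -> (r | 2) -> r = 2.
Proof. intros Pr D. apply prime_div_prime; auto. apply prime_2. Qed.

Lemma prime_not_div_4 r : prime r -> r <> 2 -> ~ (r | 4).
Proof.
  intros Pr E D. apply E. apply prime_div_2; auto.
  change 4 with (2*2) in D. destruct (prime_mult r Pr 2 2 D); auto.
Qed.

Section S.
Variables d1 d2 c0 : Z.
Hypothesis hcop : Z.gcd d1 d2 = 1.

Definition P (n : Z) := exists c, (exists k, c = c0 + 4 * k) /\
  forall p, prime p -> p <> 2 -> (p | n) -> ~ (p | c) /\ ~ (p | c * d1 - d2).

Lemma base_prime p : prime p -> p <> 2 -> exists c, ~ (p | c) /\ ~ (p | c * d1 - d2).
Proof.
  intros Pp E.
  assert (Hp2 := prime_ge_2 p Pp).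
  assert (N1 : ~ (p | 1)) by (intro D; apply Z.divide_pos_le in D; lia).
  assert (N2 : ~ (p | 2)) by (intro D; apply E; apply prime_div_2; auto).
  destruct (Zdivide_dec p (1 * d1 - d2)) as [D1|D1].
  - exists 2; split; auto. intro D2.
    assert (Hd1 : (p | d1)).
    { replace d1 with ((2*d1 - d2) - (1*d1 - d2)) by ring. apply Z.divide_sub_r; auto. }
    assert (Hd2 : (p | d2)).
    { replace d2 with (d1 - (1*d1 - d2)) by ring. apply Z.divide_sub_r; auto. }
    apply N1. rewrite <- hcop. apply Z.gcd_greatest; auto.
  - exists 1; split; auto.
Qed.

Lemma P_all : forall n, 1 <= n -> P n.
Proof.
  intros n Hn0. assert (Hn : 0 <= n) by lia. revert Hn0.
  pattern n; apply Z_lt_induction; [|exact Hn].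
  intros x IH Hx.
  destruct (Z.eq_dec x 1) as [E|E].
  - exists c0; split; [exists 0; lia|].
    intros p Pp _ D. subst x. apply Z.divide_pos_le in D; [|lia]. apply prime_ge_2 in Pp; lia.
  - destruct (prime_divisor_exists x ltac:(lia)) as [p [Pp [m Hm]]].
    assert (Hp2 := prime_ge_2 p Pp).
    assert (Hm1 : 1 <= m) by (assert (0 < m) by (apply (Z.mul_pos_cancel_r m p); lia); lia).
    assert (Hmx : m < x) by nia.
    destruct (IH m ltac:(lia) Hm1) as [c1 [[k1 Hk1] Hc1]].
    assert (Hsplit : forall r, prime r -> (r | x) -> r = p \/ (r | m)).
    { intros r Pr D. rewrite Hm in D. destruct (prime_mult r Pr m p D) as [A|A]; auto.
      left. apply prime_div_prime; auto. }
    destruct (Z.eq_dec p 2) as [E2|E2].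
    + exists c1; split; [exists k1; auto|].
      intros r Pr Er D. destruct (Hsplit r Pr D) as [A|A]; [lia|auto].
    + destruct (Zdivide_dec p m) as [Dm|Dm].
      * exists c1; split; [exists k1; auto|].
        intros r Pr Er D. destruct (Hsplit r Pr D) as [A|A]; [subst r|]; auto.
      * assert (RP : rel_prime p (4*m)).
        { apply rel_prime_mult.
          - apply prime_rel_prime; auto. apply prime_not_div_4; auto.
          - apply prime_rel_prime; auto. }
        destruct (rel_prime_bezout _ _ RP) as [u v Huv].
        destruct (base_prime p Pp E2) as [c2 [C2a C2b]].
        exists (c1 + 4*m*(v*(c2-c1))).
        split; [exists (k1 + m*(v*(c2-c1))); lia|].
        assert (Eq2 : c1 + 4*m*(v*(c2-c1)) = c2 + p*(u*(c1-c2))).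
        { assert (H4 : 4*m*v = 1 - u*p) by (rewrite <- Huv; ring).
          replace (4*m*(v*(c2-c1))) with ((4*m*v)*(c2-c1)) by ring; rewrite H4; ring. }
        intros r Pr Er D. destruct (Hsplit r Pr D) as [A|A].
        -- subst r. rewrite Eq2. split.
           ++ intro X. apply C2a. apply (Z.divide_add_cancel_r p (p*(u*(c1-c2))) c2).
              ** exists (u*(c1-c2)); ring.
              ** rewrite Z.add_comm; auto.
           ++ intro X. apply C2b.
              replace (c2*d1-d2) with ((c2 + p*(u*(c1-c2)))*d1 - d2 - p*(u*(c1-c2)*d1)) by ring.
              apply Z.divide_sub_r; auto. exists (u*(c1-c2)*d1); ring.
        -- destruct (Hc1 r Pr Er A) as [H1 H2].
           assert (Dm4 : (r | 4*m*(v*(c2-c1)))).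
           { destruct A as [j Hj]. exists (4*j*(v*(c2-c1))). rewrite Hj. ring. }
           split.
           ++ intro X. apply H1.
              replace c1 with ((c1 + 4*m*(v*(c2-c1))) - 4*m*(v*(c2-c1))) by ring.
              apply Z.divide_sub_r; auto.
           ++ intro X. apply H2.
              replace (c1*d1-d2) with ((c1 + 4*m*(v*(c2-c1)))*d1 - d2 - 4*m*(v*(c2-c1))*d1) by ring.
              apply Z.divide_sub_r; auto. apply Z.divide_mul_l; auto.
Qed.
End S.

Lemma two_div_iff y : (2 | y) <-> Z.odd y = false.
Proof.
  split.
  - intros [z Hz]; subst y. rewrite Z.odd_mul. simpl. apply Bool.andb_false_r.
  - intros H. assert (Z.even y = true) by (rewrite <- Z.negb_odd, H; reflexivity).
    apply Z.even_spec in H0. destruct H0 as [m Hm]. exists m; lia.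
Qed.

Theorem lemma4p2 (q d1 d2 : Z) (hq : 2 <= q) (hd1 : 1 <= d1) (hd2 : 1 <= d2)
  (hcop : Z.gcd d1 d2 = 1) :
  exists c : Z, Z.gcd c (q - 1) = 1 /\
    Z.gcd (c * d1 - d2) (q - 1) =
      (if andb (Z.odd q) (andb (Z.odd d1) (Z.odd d2)) then 2 else 1).
Proof.
  assert (Hnot2 : ~ ((2 | d1) /\ (2 | d2))).
  { intros [A B]. assert (2 | 1) by (rewrite <- hcop; apply Z.gcd_greatest; auto).
    apply Z.divide_pos_le in H; lia. }
  assert (Hc0 : exists c0, (c0 = 1 \/ c0 = 3) /\ ~ (4 | c0 * d1 - d2)).
  { destruct (Zdivide_dec 4 (1*d1 - d2)) as [D|D]; [|exists 1; auto].
    exists 3; split; auto. intro D3. apply Hnot2.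
    assert (D2 : (4 | 2 * d1)).
    { replace (2*d1) with ((3*d1-d2) - (1*d1-d2)) by ring. apply Z.divide_sub_r; auto. }
    destruct D2 as [j Hj]. split; [exists j; lia|].
    destruct D as [i Hi]. exists (j - 2*i); lia. }
  destruct Hc0 as [c0 [Hc0 H4]].
  destruct (P_all d1 d2 c0 hcop (q-1) ltac:(lia)) as [c [[k Hk] HP]].
  assert (Hco : Z.odd c = true).
  { subst c. rewrite Z.odd_add, Z.odd_mul. destruct Hc0; subst c0; reflexivity. }
  exists c. split.
  - apply gcd_one_of_noprime; [lia|]. intros r Pr Dc Dn.
    destruct (Z.eq_dec r 2) as [E|E].
    + subst r. apply two_div_iff in Dc. congruence.
    + destruct (HP r Pr E Dn); auto.
  - set (x := c * d1 - d2).
    set (g := Z.gcd x (q-1)).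
    assert (Hg0 : 0 < g).
    { assert (0 <= g) by apply Z.gcd_nonneg.
      assert (g <> 0) by (intro E; apply Z.gcd_eq_0 in E; lia). lia. }
    assert (Hgx : (g | x)) by apply Z.gcd_divide_l.
    assert (Hgn : (g | q - 1)) by apply Z.gcd_divide_r.
    assert (Hg12 : g = 1 \/ g = 2).
    { apply one_or_two; auto.
      - intros r Pr E D. destruct (HP r Pr E) as [_ B].
        + eapply Z.divide_trans; eauto.
        + apply B. eapply Z.divide_trans; eauto.
      - intro D. apply H4.
        assert (D' : (4 | x)) by (eapply Z.divide_trans; eauto).
        replace (c0*d1-d2) with (x - 4*(k*d1)) by (unfold x; subst c; ring).
        apply Z.divide_sub_r; auto. apply Z.divide_factor_l. }
    assert (Hxo : Z.odd x = xorb (Z.odd d1) (Z.odd d2)).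
    { unfold x. rewrite Z.odd_sub, Z.odd_mul, Hco. reflexivity. }
    assert (Hno : Z.odd (q - 1) = negb (Z.odd q)).
    { rewrite Z.odd_sub. simpl. destruct (Z.odd q); reflexivity. }
    destruct (Z.odd q) eqn:Eq; destruct (Z.odd d1) eqn:E1; destruct (Z.odd d2) eqn:E2; simpl;
      simpl in Hxo, Hno;
      try (destruct Hg12 as [G|G]; [|exfalso; rewrite G in Hgx, Hgn;
             apply two_div_iff in Hgx; apply two_div_iff in Hgn; congruence]; exact G);
      try (destruct Hg12 as [G|G]; [exfalso; rewrite G in *|exact G];
           assert (D2 : (2 | g)) by (apply Z.gcd_greatest; apply two_div_iff; auto);
           apply Z.divide_pos_le in D2; lia);
      exfalso; apply Hnot2; split; apply two_div_iff; auto.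
Qed.
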